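(* Let $n,m$ be positive integers and $R_1,\dots,R_n:\{0,\dots,m\}\to\mathbb{R}$ arbitrary functions with $R_j(0)=0$. Let $0\le k<nm$ and let $\mathbf{x}$ be an optimal $k$-profile. Then there exists an optimal $(k+1)$-profile $\mathbf{y}$ such that $\mathrm{diff}(\mathbf{x},\mathbf{y})$ is irreducible.
   Context: A $k$-profile is a vector $\mathbf{x}=(x_1,\dots,x_n)$ with $x_j\in\{0,\dots,m\}$ and $\sum_j x_j=k$; it is optimal if its revenue $\sum_j R_j(x_j)$ is maximum among all $k$-profiles. For a $k$-profile $\mathbf{x}$ and a $(k+1)$-profile $\mathbf{y}$, $\mathrm{diff}(\mathbf{x},\mathbf{y})=(A,B)$ where $A$ is the multiset $\{y_i-x_i: i\in[n],\ y_i>x_i\}$ and $B$ is the multiset $\{x_i-y_i: i\in[n],\ x_i>y_i\}$ (both multisets of elements of $\{1,\dots,m\}$). A pair of multisets $(A,B)$ is reducible if the sum of some nonempty sub-multiset of $A$ equals the sum of some nonempty sub-multiset of $B$, and irreducible otherwise. *)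

(* Defs.v *)
From mathcomp Require Import all_boot all_order all_algebra.
From mathcomp Require Import reals.
Set Implicit Arguments. Unset Strict Implicit. Unset Printing Implicit Defensive.
Import Order.TTheory GRing.Theory Num.Theory.

Definition is_profile (n m k : nat) (x : 'I_n -> 'I_m.+1) : Prop :=
  (\sum_(j < n) (x j : nat))%N = k.

Definition revenue (R : realType) (n m : nat) (Rf : 'I_n -> 'I_m.+1 -> R)
  (x : 'I_n -> 'I_m.+1) : R := (\sum_(j < n) Rf j (x j))%R.

Definition optimal_profile (R : realType) (n m k : nat) (Rf : 'I_n -> 'I_m.+1 -> R)
  (x : 'I_n -> 'I_m.+1) : Prop :=
  is_profile k x /\
  forall x' : 'I_n -> 'I_m.+1, is_profile k x' -> (revenue Rf x' <= revenue Rf x)%R.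

(* diff(x,y) = (A,B), multisets represented as sequences of naturals *)
Definition diffA (n m : nat) (x y : 'I_n -> 'I_m.+1) : seq nat :=
  [seq (y i - x i)%N | i <- enum 'I_n & (x i < y i)%N].
Definition diffB (n m : nat) (x y : 'I_n -> 'I_m.+1) : seq nat :=
  [seq (x i - y i)%N | i <- enum 'I_n & (y i < x i)%N].

(* A sub-multiset of a multiset s is mask b s for some bitmask b. *)
Definition reducible (A B : seq nat) : Prop :=
  exists (a b : bitseq),
    mask a A != [::] /\ mask b B != [::] /\ sumn (mask a A) = sumn (mask b B).

Definition irreducible (A B : seq nat) : Prop := ~ reducible A B.

(* Main.v *)
Require Import Defs.
From mathcomp Require Import all_boot all_order all_algebra.
From mathcomp Require Import reals.
From mathcomp Require Import zify lra.
From Stdlib Require Import Classical.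
Import Order.TTheory GRing.Theory Num.Theory.

Definition dist n m (u v : 'I_n -> 'I_m.+1) : nat :=
  (\sum_(i < n) ((u i - v i) + (v i - u i)))%N.

Arguments dist {n m}.

Lemma step (R : realType) n m (Rf : 'I_n -> 'I_m.+1 -> R) (k : nat) (x y : 'I_n -> 'I_m.+1) :
  optimal_profile k Rf x -> optimal_profile k.+1 Rf y ->
  reducible (diffA x y) (diffB x y) ->
  exists z, optimal_profile k.+1 Rf z /\ (dist x z < dist x y)%N.
Proof.
move=> [px ox] [py oy] [a [b [na [nb eqs]]]].
pose I := mask a [seq i <- enum 'I_n | (x i < y i)%N].
pose J := mask b [seq i <- enum 'I_n | (y i < x i)%N].
have eA : mask a (diffA x y) = [seq (y i - x i)%N | i <- I] by rewrite /I map_mask.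
have eB : mask b (diffB x y) = [seq (x i - y i)%N | i <- J] by rewrite /J map_mask.
have uI : uniq I by apply: mask_uniq; apply: filter_uniq; apply: enum_uniq.
have uJ : uniq J by apply: mask_uniq; apply: filter_uniq; apply: enum_uniq.
have hI : forall i, i \in I -> (x i < y i)%N.
  by move=> i /mem_mask; rewrite mem_filter => /andP[].
have hJ : forall i, i \in J -> (y i < x i)%N.
  by move=> i /mem_mask; rewrite mem_filter => /andP[].
have sI : sumn (mask a (diffA x y)) = (\sum_i (if i \in I then y i - x i else 0))%N.
  by rewrite eA sumnE big_map big_uniq // big_mkcond.
have sJ : sumn (mask b (diffB x y)) = (\sum_i (if i \in J then x i - y i else 0))%N.
  by rewrite eB sumnE big_map big_uniq // big_mkcond.
pose C i := (i \in I) || (i \in J).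
pose z := fun i => if C i then x i else y i.
pose w := fun i => if C i then y i else x i.
have pw : is_profile k w.
  have : (\sum_i (w i : nat) + \sum_i (if i \in J then x i - y i else 0)
      = \sum_i (x i : nat) + \sum_i (if i \in I then y i - x i else 0))%N.
    rewrite -!big_split; apply: eq_bigr => i _ /=.
    rewrite /w /C; have := hI i; have := hJ i.
    case: (i \in I); case: (i \in J) => /= h1 h2; lia.
  rewrite -sI -sJ eqs; move: px; rewrite /is_profile => ->. exact: addIn.
have pz : is_profile k.+1 z.
  have : (\sum_i (z i : nat) + \sum_i (if i \in I then y i - x i else 0)
      = \sum_i (y i : nat) + \sum_i (if i \in J then x i - y i else 0))%N.
    rewrite -!big_split; apply: eq_bigr => i _ /=.
    rewrite /z /C; have := hI i; have := hJ i.
    case: (i \in I); case: (i \in J) => /= h1 h2; lia.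
  rewrite -sI -sJ eqs; move: py; rewrite /is_profile => ->; exact: addIn.
have erev : (revenue Rf z + revenue Rf w = revenue Rf x + revenue Rf y)%R.
  rewrite /revenue -!big_split; apply: eq_bigr => i _ /=.
  by rewrite /z /w; case: (C i) => //; rewrite addrC.
have hw := ox w pw.
exists z; split.
  split => // y'' py''; have := oy y'' py''; lra.
have [i0 Hi0] : exists i0, i0 \in I.
  move: na; rewrite eA; case: (I) => // i0 s _; exists i0; by rewrite inE eqxx.
have ed : dist x y = (dist x z + \sum_i (if C i then (x i - y i) + (y i - x i) else 0))%N.
  rewrite /dist -big_split; apply: eq_bigr => i _ /=.
  rewrite /z; case: (C i) => /=; lia.
rewrite ed (bigD1 i0) //= /C Hi0 /=.
have := hI i0 Hi0; lia.
Qed.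

Arguments step {R n m Rf k x y}.

Theorem lemma3 (R : realType) (n m : nat) (Rf : 'I_n -> 'I_m.+1 -> R)
  (hn : (0 < n)%N) (hm : (0 < m)%N)
  (hR0 : forall j : 'I_n, Rf j ord0 = 0%R)
  (k : nat) (hk : (k < n * m)%N)
  (x : 'I_n -> 'I_m.+1) (hx : optimal_profile k Rf x) :
  exists y : 'I_n -> 'I_m.+1,
    optimal_profile k.+1 Rf y /\ irreducible (diffA x y) (diffB x y).
Proof.
have main : forall d y, optimal_profile k.+1 Rf y -> (dist x y <= d)%N ->
  exists y', optimal_profile k.+1 Rf y' /\ irreducible (diffA x y') (diffB x y').
  elim=> [|d IH] y oy hd;
    (case: (classic (reducible (diffA x y) (diffB x y))) => hr; last by exists y);
    have [z [oz hz]] := step hx oy hr.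
    lia.
  apply: (IH z oz); lia.
have [px ox] := hx.
have [i0 hi0] : exists i0, (x i0 < m)%N.
  apply: NNPP => H.
  have hge : forall i, (m <= x i)%N.
    move=> i; rewrite leqNgt; apply/negP => h; apply: H; by exists i.
  have : (\sum_(i < n) m <= \sum_(i < n) (x i : nat))%N by apply: leq_sum => i _.
  rewrite sum_nat_const card_ord px; lia.
pose y0 := fun j => if j == i0 then (inord (x i0).+1 : 'I_m.+1) else x j.
have py0 : is_profile k.+1 y0.
  rewrite /is_profile -px (bigD1 i0) //= [in RHS](bigD1 i0) //= /y0 eqxx inordK; last by lia.
  rewrite addSn; congr (_.+1 + _)%N; apply: eq_bigr => j /negbTE ->; done.
pose P := fun f : {ffun 'I_n -> 'I_m.+1} => (\sum_(j < n) (f j : nat) == k.+1)%N.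
pose F := fun f : {ffun 'I_n -> 'I_m.+1} => revenue Rf f.
have P0 : P (finfun y0) by rewrite /P; apply/eqP; rewrite -py0; apply: eq_bigr => j _; rewrite ffunE.
case: (@arg_maxP _ R _ _ P F P0) => f Pf Hmax.
have opt : optimal_profile k.+1 Rf f.
  split; first by apply/eqP.
  move=> y'' py''.
  have Py : P (finfun y'') by rewrite /P; apply/eqP; rewrite -py''; apply: eq_bigr => j _; rewrite ffunE.
  have := Hmax _ Py; rewrite /F.
  have -> : revenue Rf (finfun y'') = revenue Rf y'' by apply: eq_bigr => j _; rewrite ffunE.
  done.
exact: (main _ _ opt (leqnn _)).
Qed.
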